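(* Let $\alpha\in[0,1)$. The function $g_\alpha$ attains its global maximum on $[0,1]$ at a single point $x_0\in[0,1/2]$, which is characterized as the solution of $G_\alpha(x_0)=x_0+\tfrac12$. Moreover: (1) if $\alpha>0$, $x_0$ is the only critical point of $g_\alpha$ in $[0,1]$; (2) in the two-type setting, if $\phi_i<2\log2$ then for every $p\in[0,1]^2$ with $p_i\le\bar p_i$ one has $f^{(i)}(p)<x_0(\alpha(i))$, where $x_0(\alpha(i))$ is the maximizer of $g_{\alpha(i)}$; in particular $g_{\alpha(i)}'(f^{(i)}(p))\ge0$ for all $p\in[0,\bar p_1]\times[0,\bar p_2]$.
   Context: For $\alpha\in(0,1)$ let $g_\alpha(x)=\frac{(1-\sqrt{1-4(1-\alpha)x(1-x)})^3}{8(1-\alpha)^2x^2}$ for $x\in(0,1]$ and $g_\alpha(0)=0$; let $g_0(x)=x$ for $x\le1/2$ and $g_0(x)=(1-x)^3/x^2$ for $x>1/2$. Let $G_\alpha(x)=\frac{1-\sqrt{1-4(1-\alpha)x(1-x)}}{2(1-\alpha)x}$ (with $G_\alpha(0)=1$), so $g_\alpha(x)=(1-\alpha)xG_\alpha(x)^3$. Two-type setting: $\beta_1,\beta_2>0$, $\alpha(1),\alpha(2)\in[0,1)$, $\phi_i=(1-\alpha(i))\beta_i$; for $p\in[0,1]^2$, $S(p)=\beta_1p_1+\beta_2p_2$ and $f^{(i)}(p)=(1-e^{-S(p)})\beta_ip_i/S(p)$ ($=0$ if $S(p)=0$); $\bar p_i=\sup_{x\in[0,1]}g_{\alpha(i)}(x)$.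 *)

(* Defs.v *)
From Stdlib Require Import Reals Lra.
Open Scope R_scope.

Definition Gfun (a x : R) : R :=
  if Req_EM_T x 0 then 1
  else (1 - sqrt (1 - 4 * (1 - a) * x * (1 - x))) / (2 * (1 - a) * x).

Definition gfun (a x : R) : R :=
  if Req_EM_T a 0 then
    (if Rle_dec x (1/2) then x else (1 - x) ^ 3 / x ^ 2)
  else
    (if Req_EM_T x 0 then 0
     else (1 - sqrt (1 - 4 * (1 - a) * x * (1 - x))) ^ 3
          / (8 * (1 - a) ^ 2 * x ^ 2)).

(* Two-type setting: beta, p : nat -> R, only indices 1 and 2 are used. *)
Definition Ssum (beta p : nat -> R) : R := beta 1%nat * p 1%nat + beta 2%nat * p 2%nat.

Definition ffun (beta p : nat -> R) (i : nat) : R :=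
  if Req_EM_T (Ssum beta p) 0 then 0
  else (1 - exp (- Ssum beta p)) * beta i * p i / Ssum beta p.

Definition is_maximizer (a x0 : R) : Prop :=
  0 <= x0 <= 1 /\ forall x, 0 <= x <= 1 -> gfun a x <= gfun a x0.

Definition is_sup_g (a pbar : R) : Prop :=
  is_lub (fun y => exists x, 0 <= x <= 1 /\ y = gfun a x) pbar.

(* Main.v *)
Require Import Defs.
From Stdlib Require Import Reals Lra Psatz.
From Coquelicot Require Import Coquelicot.
Open Scope R_scope.
Definition Dd (a x : R) := 1 - 4 * (1 - a) * x * (1 - x).
Lemma Dd_eq a x : Dd a x = a + (1-a)*(2*x-1)^2.
Proof. unfold Dd; ring. Qed.
Lemma Dd_pos a x : 0 < a < 1 -> 0 < Dd a x.
Proof. intros. rewrite Dd_eq. assert (0 <= (1-a)*(2*x-1)^2) by (apply Rmult_le_pos; [lra | apply pow2_ge_0]). lra. Qed.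
Lemma der1 a x : 0 < a < 1 -> x <> 0 ->
  is_derive (fun t => (1 - sqrt (Dd a t)) ^ 3 / (8 * (1 - a) ^ 2 * t ^ 2)) x
   ((1 - sqrt (Dd a x))^2 * (1 - (1-a)*x*(2*x+1) - sqrt (Dd a x)) / (4*(1-a)^2*x^3*sqrt (Dd a x))).
Proof.
intros Ha Hx.
pose proof (Dd_pos a x Ha) as HD.
unfold Dd in *.
auto_derive.
- assert (0 < x*x) by (destruct (Rlt_or_le 0 x); nra).
  split; [lra|]. split; [|exact I]. 
  assert (0 < 8*((1-a)*((1-a)*1))*(x*(x*1))) by (rewrite !Rmult_1_r; apply Rmult_lt_0_compat; nra). lra.
- replace (1 + - (4*(1-a)*x*(1+-x))) with (1 - 4*(1-a)*x*(1-x)) by ring.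
  set (D := 1 - 4*(1-a)*x*(1-x)) in *.
  assert (Hs0: 0 < sqrt D) by (apply sqrt_lt_R0; lra).
  assert (Hs : sqrt D ^ 2 = D) by (simpl; rewrite Rmult_1_r; apply sqrt_sqrt; lra).
  set (s := sqrt D) in *. clearbody s. unfold D. unfold D in Hs.
  field [Hs].
  split; [lra|]. split; [lra|]. lra.
Qed.

Lemma gfun_pos a t : 0 < a < 1 -> gfun a t =
  (if Req_EM_T t 0 then 0 else (1 - sqrt (Dd a t)) ^ 3 / (8 * (1 - a) ^ 2 * t ^ 2)).
Proof. intros Ha. unfold gfun. destruct (Req_EM_T a 0); [lra|]. reflexivity. Qed.

Lemma sqD a t : 0 < a < 1 -> sqrt (Dd a t) ^ 2 = Dd a t /\ 0 < sqrt (Dd a t).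
Proof. intros Ha. pose proof (Dd_pos a t Ha). split.
 simpl; rewrite Rmult_1_r; apply sqrt_sqrt; lra. apply sqrt_lt_R0; lra. Qed.

Lemma gfun_tilde a t : 0 < a < 1 -> gfun a t = (1-a)*t*(2*(1-t)/(1+sqrt(Dd a t)))^3.
Proof. intros Ha. rewrite gfun_pos by auto. destruct (Req_EM_T t 0).
 - subst; ring.
 - destruct (sqD a t Ha) as [Hs Hs0]. set (s := sqrt (Dd a t)) in *. clearbody s.
   unfold Dd in Hs. field [Hs]. split; [lra|]. split; [lra|auto].
 lra.
Qed.

Lemma der0 a : 0 < a < 1 -> is_derive (fun t => (1-a)*t*(2*(1-t)/(1+sqrt(Dd a t)))^3) 0 (1-a).
Proof. intros Ha. unfold Dd.
 auto_derive; replace (1 + - (4 * (1 - a) * 0 * (1 + - 0))) with 1 by ring; rewrite ?sqrt_1.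
 - split; [lra|]. split; [lra|exact I].
 - field.
Qed.

Lemma locally_neq x : x <> 0 -> locally x (fun t => t <> 0).
Proof. intros Hx. assert (H: 0 < Rabs x) by (apply Rabs_pos_lt; auto).
 exists (mkposreal _ H). intros y Hy. unfold ball in Hy; simpl in Hy.
 unfold AbsRing_ball, abs, minus, plus, opp in Hy; simpl in Hy.
 intro E; subst. rewrite Rplus_0_l, Rabs_Ropp in Hy. lra. Qed.

Definition gder (a x : R) : R := if Req_EM_T x 0 then 1 - a else
  (1 - sqrt (Dd a x))^2 * (1 - (1-a)*x*(2*x+1) - sqrt (Dd a x)) / (4*(1-a)^2*x^3*sqrt (Dd a x)).

Lemma gfun_der a x : 0 < a < 1 -> derivable_pt_lim (gfun a) x (gder a x).
Proof. intros Ha. apply is_derive_Reals. unfold gder. destruct (Req_EM_T x 0).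
 - subst. eapply is_derive_ext_loc; [|apply der0; auto].
   exists (mkposreal 1 Rlt_0_1). intros. symmetry; apply gfun_tilde; auto.
 - eapply is_derive_ext_loc; [|apply der1; auto].
   generalize (locally_neq x n). apply filter_imp. intros t Ht.
   rewrite gfun_pos by auto. destruct (Req_EM_T t 0); [contradiction|reflexivity].
Qed.

Definition Pp (a x : R) := (1-a)*x*(x+1/2)^2 - 2*x + 1/2.
Definition Nn (a x : R) := 1 - (1-a)*x*(2*x+1) - sqrt (Dd a x).

Lemma Pp_dec a x y : 0 < a < 1 -> 0 <= x -> x < y -> y <= 1/2 -> Pp a y < Pp a x.
Proof. intros Ha Hx Hxy Hy. unfold Pp.
 assert (K: y*(y+1/2)^2 - x*(x+1/2)^2 = (y-x)*(y*y+x*y+x*x+x+y+1/4)) by field.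
 assert (K2: y*y+x*y+x*x+x+y+1/4 <= 2) by nra.
 assert (K3: 0 <= y*y+x*y+x*x+x+y+1/4) by nra.
 assert (K4: (1-a)*(y*(y+1/2)^2 - x*(x+1/2)^2) < 2*(y-x)).
 { rewrite K. assert (0 < y - x) by lra.
   assert ((1-a)*((y-x)*(y*y+x*y+x*x+x+y+1/4)) <= (1-a)*((y-x)*2)).
   { apply Rmult_le_compat_l; [lra|]. apply Rmult_le_compat_l; lra. } nra. }
 lra.
Qed.

Lemma Pp_root a : 0 < a < 1 -> exists x0, 0 < x0 < 1/2 /\ Pp a x0 = 0.
Proof. intros Ha.
 assert (C : continuity (fun x => - Pp a x)).
 { unfold Pp. intros x. reg. }
 destruct (IVT (fun x => - Pp a x) 0 (1/2) C) as [z [Hz E]].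
 - lra.
 - unfold Pp; lra.
 - unfold Pp; lra.
 - exists z. assert (Pp a z = 0) by lra. split; [|auto].
   split; destruct (Req_dec z 0); destruct (Req_dec z (1/2)); subst; unfold Pp in *; lra.
Qed.

Lemma AD a x : Dd a x = (1 - (1-a)*x*(2*x+1))^2 - 4*(1-a)*x*Pp a x.
Proof. unfold Dd, Pp. field. Qed.

Lemma s_bound a x : 0 < a < 1 -> 1 - 2*(1-a)*x <= sqrt (Dd a x).
Proof. intros Ha. destruct (Rle_or_lt (1 - 2*(1-a)*x) 0).
 - pose proof (sqrt_pos (Dd a x)); lra.
 - rewrite <- (sqrt_pow2 (1 - 2*(1-a)*x)) by lra. apply sqrt_le_1_alt.
   unfold Dd. nra.
Qed.

Lemma N_sign_small a x : 0 < a < 1 -> 0 < x <= 1/2 ->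
  (0 < Pp a x -> 0 < Nn a x) /\ (Pp a x < 0 -> Nn a x < 0) /\ (Pp a x = 0 -> Nn a x = 0).
Proof. intros Ha Hx.
 assert (HA: 0 < 1 - (1-a)*x*(2*x+1)) by nra.
 destruct (sqD a x Ha) as [Hs Hs0]. pose proof (AD a x) as E.
 unfold Nn. set (s := sqrt (Dd a x)) in *. set (A := 1 - (1-a)*x*(2*x+1)) in *.
 clearbody s A. rewrite E in Hs.
 assert (0 < (1-a)*x) by nra.
 split; [|split].
 - intros HP. nra.
 - intros HP. nra.
 - intros HP. rewrite HP in Hs. nra.
Qed.

Lemma N_neg_big a x : 0 < a < 1 -> 1/2 < x -> Nn a x < 0.
Proof. intros Ha Hx. pose proof (s_bound a x Ha). unfold Nn.
 assert (0 < (1-a)*x*(2*x-1)) by (apply Rmult_lt_0_compat; [apply Rmult_lt_0_compat|]; lra). nra. Qed.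

Lemma gder_sign a x : 0 < a < 1 -> 0 < x < 1 -> exists K, 0 < K /\ gder a x = K * Nn a x.
Proof. intros Ha Hx. unfold gder. destruct (Req_EM_T x 0); [lra|].
 destruct (sqD a x Ha) as [Hs Hs0].
 assert (Hs1 : sqrt (Dd a x) < 1).
 { rewrite <- sqrt_1. apply sqrt_lt_1_alt. split; [pose proof (Dd_pos a x Ha); lra|]. unfold Dd.
   assert (0 < (1-a)*x*(1-x)) by (apply Rmult_lt_0_compat; [apply Rmult_lt_0_compat|]; lra). lra. }
 unfold Nn. set (s := sqrt (Dd a x)) in *. clearbody s.
 exists ((1-s)^2 / (4*(1-a)^2*x^3*s)). split.
 - apply Rdiv_lt_0_compat. apply pow_lt; lra.
   apply Rmult_lt_0_compat; [|lra]. apply Rmult_lt_0_compat; [|apply pow_lt; lra].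
   apply Rmult_lt_0_compat; [lra|apply pow_lt; lra].
 - field. split; [lra|]. split; lra.
Qed.

Lemma root_props a : 0 < a < 1 -> exists x0, 0 < x0 < 1/2 /\ Nn a x0 = 0 /\
  (forall x, 0 < x < x0 -> 0 < Nn a x) /\ (forall x, x0 < x <= 1 -> Nn a x < 0).
Proof. intros Ha. destruct (Pp_root a Ha) as [x0 [Hx0 HP]]. exists x0.
 split; [auto|]. split; [apply (N_sign_small a x0 Ha); [lra|auto]|]. split.
 - intros x Hx. apply (N_sign_small a x Ha); [lra|]. rewrite <- HP. apply Pp_dec; lra.
 - intros x Hx. destruct (Rle_or_lt x (1/2)).
   + apply (N_sign_small a x Ha); [lra|]. rewrite <- HP. apply Pp_dec; lra.
   + apply N_neg_big; auto.
Qed.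

Definition P1 (a x0 : R) : Prop :=
 0 <= x0 <= 1/2 /\ is_maximizer a x0 /\ (forall x, 0 <= x <= 1 -> gfun a x = gfun a x0 -> x = x0) /\
 Gfun a x0 = x0 + 1/2 /\ (forall x, 0 <= x <= 1 -> Gfun a x = x + 1/2 -> x = x0) /\
 (0 < a -> forall x, 0 < x < 1 -> derivable_pt_lim (gfun a) x 0 -> x = x0).

Definition P1x (a x0 : R) : Prop :=
 0 < x0 /\ gfun a x0 = (1-a)*x0*(x0+1/2)^3 /\
 (forall x, 0 <= x < x0 -> exists l, derivable_pt_lim (gfun a) x l /\ 0 <= l).

Lemma Gfun_nz a x : x <> 0 -> Gfun a x = (1 - sqrt (Dd a x)) / (2*(1-a)*x).
Proof. intros H. unfold Gfun. destruct (Req_EM_T x 0); [contradiction|reflexivity]. Qed.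

Lemma part1_pos a : 0 < a < 1 -> exists x0, P1 a x0 /\ P1x a x0.
Proof. intros Ha. destruct (root_props a Ha) as [x0 [Hx0 [HN0 [Hlt Hgt]]]].
 assert (inc : forall x y, 0 <= x < y -> y <= x0 -> gfun a x < gfun a y).
 { intros x y Hxy Hy. destruct (MVT_cor2 (gfun a) (gder a) x y) as [c [E Hc]]; [lra| |].
   - intros; apply gfun_der; auto.
   - destruct (gder_sign a c Ha) as [K [HK EK]]; [lra|]. rewrite EK in E.
     assert (0 < Nn a c) by (apply Hlt; lra). assert (0 < K * Nn a c * (y-x)).
     { apply Rmult_lt_0_compat; [apply Rmult_lt_0_compat|]; lra. } lra. }
 assert (dec : forall x y, x0 <= x < y -> y <= 1 -> gfun a y < gfun a x).
 { intros x y Hxy Hy. destruct (MVT_cor2 (gfun a) (gder a) x y) as [c [E Hc]]; [lra| |].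
   - intros; apply gfun_der; auto.
   - destruct (gder_sign a c Ha) as [K [HK EK]]; [lra|]. rewrite EK in E.
     assert (Nn a c < 0) by (apply Hgt; lra). assert (0 < K * (- Nn a c) * (y-x)).
     { apply Rmult_lt_0_compat; [apply Rmult_lt_0_compat|]; lra. } lra. }
 assert (Hs : sqrt (Dd a x0) = 1 - (1-a)*x0*(2*x0+1)) by (unfold Nn in HN0; lra).
 exists x0. split; [split; [lra|]; split; [|split; [|split; [|split]]]|].
 - split; [lra|]. intros x Hx. destruct (Rtotal_order x x0) as [L|[L|L]].
   + left; apply inc; lra.
   + subst; lra.
   + left; apply dec; lra.
 - intros x Hx E. destruct (Rtotal_order x x0) as [L|[L|L]]; auto.
   + pose proof (inc x x0); lra.
   + pose proof (dec x0 x); lra.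
 - rewrite Gfun_nz by lra. rewrite Hs. field. lra.
 - intros x Hx E. destruct (Req_dec x 0) as [Z|Z].
   + subst. unfold Gfun in E. destruct (Req_EM_T 0 0); [lra|contradiction].
   + rewrite Gfun_nz in E by auto.
     assert (Hs2 : sqrt (Dd a x) = 1 - (1-a)*x*(2*x+1)).
     { assert (0 < (1-a)*x) by (apply Rmult_lt_0_compat; lra).
       apply (f_equal (fun t => t * (2*(1-a)*x))) in E. field_simplify in E; [|lra]. lra. }
     assert (Nn a x = 0) by (unfold Nn; lra).
     destruct (Rtotal_order x x0) as [L|[L|L]]; auto.
     * pose proof (Hlt x); lra.
     * pose proof (Hgt x); lra.
 - intros _ x Hx Hd. pose proof (uniqueness_limite _ _ _ _ Hd (gfun_der a x Ha)) as E.
   destruct (gder_sign a x Ha Hx) as [K [HK EK]]. rewrite EK in E.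
   assert (Nn a x = 0) by nra.
   destruct (Rtotal_order x x0) as [L|[L|L]]; auto.
   + pose proof (Hlt x); lra.
   + pose proof (Hgt x); lra.
 - split; [lra|]. split.
   + rewrite gfun_pos by auto. destruct (Req_EM_T x0 0); [lra|]. rewrite Hs. field. lra.
   + intros x Hx. exists (gder a x). split; [apply gfun_der; auto|].
     destruct (Req_dec x 0) as [Z|Z].
     * unfold gder. destruct (Req_EM_T x 0); [lra|contradiction].
     * destruct (gder_sign a x Ha) as [K [HK EK]]; [lra|]. rewrite EK.
       assert (0 < Nn a x) by (apply Hlt; lra). nra.
Qed.

Lemma locally_lt x b : x < b -> locally x (fun t => t < b).
Proof. intros H. assert (H': 0 < b - x) by lra.
 exists (mkposreal _ H'). intros y Hy. unfold ball in Hy; simpl in Hy.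
 unfold AbsRing_ball, abs, minus, plus, opp in Hy; simpl in Hy.
 pose proof (Rle_abs (y + - x)). lra. Qed.

Lemma gfun0 x : gfun 0 x = if Rle_dec x (1/2) then x else (1 - x) ^ 3 / x ^ 2.
Proof. unfold gfun. destruct (Req_EM_T 0 0); [reflexivity|contradiction]. Qed.

Lemma part1_zero : P1 0 (1/2) /\ P1x 0 (1/2).
Proof.
 assert (Hv : gfun 0 (1/2) = 1/2).
 { rewrite gfun0. destruct (Rle_dec (1/2) (1/2)); [reflexivity|lra]. }
 assert (big : forall x, 1/2 < x <= 1 -> (1 - x) ^ 3 / x ^ 2 < 1/2).
 { intros x Hx. apply Rmult_lt_reg_r with (x^2); [apply pow_lt; lra|].
   unfold Rdiv. rewrite Rmult_assoc, Rinv_l by (apply pow_nonzero; lra). rewrite Rmult_1_r.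
   assert (0 <= 1 - x) by lra. assert (x^2 - (1-x)^2 = 2*x-1) by ring.
   assert ((1-x)^3 = (1-x)*(1-x)^2) by ring. assert (0 <= (1-x)^2) by apply pow2_ge_0.
   assert ((1-x)*(1-x)^2 <= 1/2 * (1-x)^2) by (apply Rmult_le_compat_r; lra). lra. }
 split; [split; [lra|]; split; [|split; [|split; [|split]]]|].
 - split; [lra|]. intros x Hx. rewrite Hv, gfun0. destruct (Rle_dec x (1/2)); [lra|].
   pose proof (big x); lra.
 - intros x Hx. rewrite Hv, gfun0. destruct (Rle_dec x (1/2)); [lra|].
   pose proof (big x); lra.
 - unfold Gfun. destruct (Req_EM_T (1/2) 0); [lra|].
   replace (1 - 4 * (1 - 0) * (1/2) * (1 - 1/2)) with 0 by field. rewrite sqrt_0. field.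
 - intros x Hx E. unfold Gfun in E. destruct (Req_EM_T x 0); [lra|].
   destruct (Rle_or_lt x (1/2)).
   + replace (1 - 4 * (1 - 0) * x * (1 - x)) with ((1 - 2*x)^2) in E by ring.
     rewrite sqrt_pow2 in E by lra.
     assert ((1-(1-2*x))/(2*(1-0)*x) = 1) by (field; lra). lra.
   + replace (1 - 4 * (1 - 0) * x * (1 - x)) with ((2*x - 1)^2) in E by ring.
     rewrite sqrt_pow2 in E by lra.
     apply (f_equal (fun t => t * (2*x))) in E. field_simplify in E; [|lra]. nra.
 - intros H; lra.
 - split; [lra|]. split; [rewrite Hv; field|].
   intros x Hx. exists 1. split; [|lra]. apply is_derive_Reals.
   apply is_derive_ext_loc with (f := fun t => t); [|auto_derive; auto].
   generalize (locally_lt x (1/2) ltac:(lra)). apply filter_imp. intros t Ht.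
   rewrite gfun0. destruct (Rle_dec t (1/2)); [reflexivity|lra].
Qed.

Lemma ln2_bounds : 3/5 < ln 2 < 1.
Proof. split.
 - apply exp_lt_inv. rewrite exp_ln by lra.
   assert (E : exp (3/5) = exp (1/5) * exp (1/5) * exp (1/5)) by (rewrite <- !exp_plus; f_equal; field).
   assert (E2 : exp (1/5) * exp (-(1/5)) = 1) by (rewrite <- exp_plus; replace (1/5 + - (1/5)) with 0 by ring; apply exp_0).
   pose proof (exp_ineq1_le (-(1/5))). pose proof (exp_pos (1/5)).
   assert (exp (1/5) <= 5/4) by nra.
   rewrite E. assert (exp (1/5) * exp (1/5) <= 25/16) by nra. nra.
 - rewrite <- (ln_exp 1). apply ln_increasing; [lra|]. pose proof (exp_ineq1 1). lra.
Qed.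

Lemma exp_bound x : 0 < x <= 1/2 -> 1 - x <= exp (-(2*ln 2)*(x*(x+1/2)^3)).
Proof. intros Hx. destruct ln2_bounds as [L1 L2]. set (L := ln 2) in *.
 destruct (Rle_or_lt x (29/100)).
 - pose proof (exp_ineq1_le (-(2*L)*(x*(x+1/2)^3))).
   assert ((x+1/2)^3 <= (79/100)^3) by (apply pow_incr; lra).
   assert (0 <= (x+1/2)^3) by (apply pow_le; lra).
   assert (2*L*(x+1/2)^3 <= 1) by nra. nra.
 - assert (E : -(2*L)*(x*(x+1/2)^3) = -L + L*(1 - 2*(x*(x+1/2)^3))) by ring.
   rewrite E, exp_plus, exp_Ropp. unfold L. rewrite exp_ln by lra. fold L.
   pose proof (exp_ineq1_le (L*(1 - 2*(x*(x+1/2)^3)))).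
   assert (Eq: 1/2 - x*(x+1/2)^3 = (1/2 - x)*(x^3+2*x^2+7/4*x+1)) by field.
   assert (5/3 <= x^3+2*x^2+7/4*x+1) by nra.
   assert (0 <= 1/2 - x) by lra.
   assert (L*(1/2 - x*(x+1/2)^3) >= 1/2 - x).
   { rewrite Eq. assert ((3/5)*((1/2-x)*(x^3+2*x^2+7/4*x+1)) <= L*((1/2-x)*(x^3+2*x^2+7/4*x+1))).
     { apply Rmult_le_compat_r; [|lra]. apply Rmult_le_pos; lra. } nra. }
   lra.
Qed.

Lemma f_bound t S : 0 <= t <= S -> 0 < S -> (1 - exp (-S)) * t / S <= 1 - exp (-t).
Proof. intros Ht HS.
 assert (A1 : 1 >= exp (-t) * (1 + t)).
 { pose proof (exp_ineq1_le t). pose proof (exp_pos (-t)).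
   assert (exp (-t) * exp t = 1) by (rewrite <- exp_plus; replace (-t + t) with 0 by ring; apply exp_0).
   nra. }
 assert (A2 : exp (-S) >= exp (-t) * (1 + t - S)).
 { pose proof (exp_ineq1_le (t - S)). pose proof (exp_pos (-t)).
   replace (-S) with (-t + (t - S)) by ring. rewrite exp_plus.
   replace (1 + t - S) with (1 + (t - S)) by ring. nra. }
 apply Rmult_le_reg_r with S; [auto|]. unfold Rdiv. rewrite Rmult_assoc, Rinv_l, Rmult_1_r by lra.
 assert ((S - t) * 1 >= (S - t) * (exp (-t) * (1 + t))) by (apply Rmult_ge_compat_l; lra).
 assert (t * exp (-S) >= t * (exp (-t) * (1 + t - S))) by (apply Rmult_ge_compat_l; lra).
 nra.
Qed.

Lemma core x0 t S phi : 0 < x0 <= 1/2 -> 0 <= t <= S -> phi < 2 * ln 2 ->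
  t <= phi * x0 * (x0+1/2)^3 ->
  (if Req_EM_T S 0 then 0 else (1 - exp (- S)) * t / S) < x0.
Proof. intros Hx Ht Hphi Htp. destruct (Req_EM_T S 0); [lra|].
 assert (HS : 0 < S) by lra.
 pose proof (f_bound t S Ht HS).
 pose proof (exp_bound x0 Hx).
 assert (0 < x0 * (x0+1/2)^3) by (apply Rmult_lt_0_compat; [lra|apply pow_lt; lra]).
 assert (t < 2 * ln 2 * (x0 * (x0+1/2)^3)) by nra.
 assert (exp (-(2*ln 2)*(x0*(x0+1/2)^3)) < exp (-t)) by (apply exp_increasing; lra).
 lra.
Qed.

Lemma core2 x0 b q S phi : 0 < x0 <= 1/2 -> 0 <= b * q <= S -> phi < 2 * ln 2 ->
  b * q <= phi * x0 * (x0+1/2)^3 ->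
  (if Req_EM_T S 0 then 0 else (1 - exp (- S)) * b * q / S) < x0.
Proof. intros. pose proof (core x0 (b*q) S phi H H0 H1 H2). rewrite <- Rmult_assoc in H3. exact H3. Qed.

Lemma fnonneg b q S : 0 <= b * q -> 0 <= S ->
  0 <= (if Req_EM_T S 0 then 0 else (1 - exp (- S)) * b * q / S).
Proof. intros. destruct (Req_EM_T S 0); [lra|].
 assert (exp (-S) <= 1) by (rewrite <- exp_0; apply exp_le_3 || (destruct (Req_dec S 0); [contradiction|]; left; apply exp_increasing; lra)).
 rewrite Rmult_assoc. apply Rdiv_le_0_compat; [apply Rmult_le_pos; lra | lra]. Qed.

Lemma part1_all a : 0 <= a < 1 -> exists x0, P1 a x0 /\ P1x a x0.
Proof. intros Ha. destruct (Req_dec a 0).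
 - subst. exists (1/2). apply part1_zero.
 - apply part1_pos. lra. Qed.

Lemma sup_eq a x0 pb : P1 a x0 -> is_sup_g a pb -> pb = gfun a x0.
Proof. intros [Hx [[_ Hm] _]] Hs. apply (is_lub_u _ _ _ Hs). split.
 - intros y [x [Hx' ->]]. apply Hm; auto.
 - intros b Hb. apply Hb. exists x0. split; [lra|reflexivity]. Qed.

Lemma max_eq a x0 x1 : P1 a x0 -> is_maximizer a x1 -> x1 = x0.
Proof. intros [Hx [[_ Hm] [Hu _]]] [Hx1 Hm1]. apply Hu; auto.
 pose proof (Hm x1 Hx1). pose proof (Hm1 x0 ltac:(lra)). lra. Qed.

Lemma pb_le1 a y : 0 <= a < 1 -> 0 < y <= 1/2 -> (1-a)*y*(y+1/2)^3 <= 1.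
Proof. intros. assert ((y+1/2)^3 <= 1^3) by (apply pow_incr; lra).
 assert (0 <= (y+1/2)^3) by (apply pow_le; lra). rewrite pow1 in H1.
 assert (0 <= (1-a)*y) by (apply Rmult_le_pos; lra).
 assert ((1-a)*y <= 1) by nra. nra. Qed.

Theorem mainTheorem14 :
  (forall a : R, 0 <= a < 1 ->
     exists x0 : R,
       0 <= x0 <= 1/2 /\
       is_maximizer a x0 /\
       (forall x, 0 <= x <= 1 -> gfun a x = gfun a x0 -> x = x0) /\
       Gfun a x0 = x0 + 1/2 /\
       (forall x, 0 <= x <= 1 -> Gfun a x = x + 1/2 -> x = x0) /\
       (0 < a -> forall x, 0 < x < 1 -> derivable_pt_lim (gfun a) x 0 -> x = x0))
  /\
  (forall (beta alpha : nat -> R) (i : nat),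
     0 < beta 1%nat -> 0 < beta 2%nat ->
     0 <= alpha 1%nat < 1 -> 0 <= alpha 2%nat < 1 ->
     (i = 1%nat \/ i = 2%nat) ->
     (1 - alpha i) * beta i < 2 * ln 2 ->
     forall pbar1 pbar2 x0 : R,
       is_sup_g (alpha 1%nat) pbar1 ->
       is_sup_g (alpha 2%nat) pbar2 ->
       is_maximizer (alpha i) x0 ->
       (forall p : nat -> R,
          0 <= p 1%nat <= 1 -> 0 <= p 2%nat <= 1 ->
          p i <= (if Nat.eqb i 1 then pbar1 else pbar2) ->
          ffun beta p i < x0) /\
       (forall p : nat -> R,
          0 <= p 1%nat <= pbar1 -> 0 <= p 2%nat <= pbar2 ->
          exists l, derivable_pt_lim (gfun (alpha i)) (ffun beta p i) l /\ 0 <= l)).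
Proof.
split.
- intros a Ha. destruct (part1_all a Ha) as [x0 [H _]]. exists x0. exact H.
- intros beta alpha i Hb1 Hb2 Ha1 Ha2 Hi Hphi pbar1 pbar2 x0 Hs1 Hs2 Hm.
  destruct (part1_all _ Ha1) as [y1 [Q1 Q1x]].
  destruct (part1_all _ Ha2) as [y2 [Q2 Q2x]].
  pose proof (sup_eq _ _ _ Q1 Hs1) as E1. pose proof (sup_eq _ _ _ Q2 Hs2) as E2.
  destruct Q1x as [Y1 [G1 D1]]. destruct Q2x as [Y2 [G2 D2]].
  assert (Y1' : y1 <= 1/2) by (destruct Q1; lra).
  assert (Y2' : y2 <= 1/2) by (destruct Q2; lra).
  rewrite G1 in E1. rewrite G2 in E2.
  pose proof (pb_le1 _ y1 Ha1 ltac:(lra)). pose proof (pb_le1 _ y2 Ha2 ltac:(lra)).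
  assert (F : forall p : nat -> R, 0 <= p 1%nat <= 1 -> 0 <= p 2%nat <= 1 ->
          p i <= (if Nat.eqb i 1 then pbar1 else pbar2) -> ffun beta p i < x0).
  { intros p Hp1 Hp2 Hpi. unfold ffun, Ssum.
    destruct Hi as [-> | ->]; simpl in Hpi.
    - rewrite (max_eq _ _ _ Q1 Hm).
      apply core2 with (phi := (1 - alpha 1%nat) * beta 1%nat); [lra| |auto|].
      + split; [apply Rmult_le_pos; lra|]. assert (0 <= beta 2%nat * p 2%nat) by (apply Rmult_le_pos; lra). lra.
      + rewrite E1 in Hpi. apply Rmult_le_compat_l with (r := beta 1%nat) in Hpi; [|lra]. lra.
    - rewrite (max_eq _ _ _ Q2 Hm).
      apply core2 with (phi := (1 - alpha 2%nat) * beta 2%nat); [lra| |auto|].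
      + split; [apply Rmult_le_pos; lra|]. assert (0 <= beta 1%nat * p 1%nat) by (apply Rmult_le_pos; lra). lra.
      + rewrite E2 in Hpi. apply Rmult_le_compat_l with (r := beta 2%nat) in Hpi; [|lra]. lra. }
  split; [exact F|].
  intros p Hp1 Hp2.
  assert (Hf : ffun beta p i < x0).
  { apply F; try lra. destruct Hi as [-> | ->]; simpl; lra. }
  assert (Hf0 : 0 <= ffun beta p i).
  { unfold ffun, Ssum. apply fnonneg.
    - destruct Hi as [-> | ->]; apply Rmult_le_pos; lra.
    - assert (0 <= beta 1%nat * p 1%nat) by (apply Rmult_le_pos; lra).
      assert (0 <= beta 2%nat * p 2%nat) by (apply Rmult_le_pos; lra). lra. }
  destruct Hi as [-> | ->].
  + rewrite (max_eq _ _ _ Q1 Hm) in Hf. apply D1. lra.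
  + rewrite (max_eq _ _ _ Q2 Hm) in Hf. apply D2. lra.
Qed.
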